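(* If $G$ is a connected graph, then $D(G)\le \dim(G)+1$. Moreover, the bound is sharp (e.g. equality holds for every path $P_n$, $n\ge 2$).
   Context: All graphs are finite and simple. For a connected graph $G$ with shortest-path distance $d_G$, a set $S\subseteq V(G)$ is resolving if for any two distinct vertices $x,y$ there is $s\in S$ with $d_G(x,s)\neq d_G(y,s)$; the metric dimension $\dim(G)$ is the minimum size of a resolving set. A distinguishing coloring of a graph $G$ is a (not necessarily proper) vertex coloring such that the only automorphism of $G$ mapping every vertex to a vertex of the same color is the identity; the distinguishing number $D(G)$ is the minimum number of colors in a distinguishing coloring of $G$. *)

(* Defs.v *)
From mathcomp Require Import all_boot fingroup perm.
Local Open Scope nat_scope.
Set Implicit Arguments. Unset Strict Implicit. Unset Printing Implicit Defensive.

Section Graphs.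
Variables (T : finType) (e : rel T).

Definition simple_graph := symmetric e /\ irreflexive e.

Definition connected_graph := forall x y : T, connect e x y.

Definition walk_of_length (k : nat) (x y : T) : bool :=
  [exists p : k.-tuple T, path e x p && (last x p == y)].

(* shortest-path distance: least k with a walk of length k from x to y
   (a shortest walk has < #|T| edges; default #|T| if unreachable, which
   never happens in a connected graph) *)
Definition gdist (x y : T) : nat :=
  \big[minn/#|T|]_(k < #|T| | walk_of_length k x y) (k : nat).

Definition resolving (S : {set T}) : bool :=
  [forall x, forall y, (x != y) ==> [exists s in S, gdist x s != gdist y s]].

(* metric dimension: minimum size of a resolving set (setT is resolving) *)
Definition metric_dim : nat :=
  \big[minn/#|T|]_(S : {set T} | resolving S) #|S|.

Definition is_automorphism (s : {perm T}) : bool :=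
  [forall x, forall y, e (s x) (s y) == e x y].

Definition distinguishing (k : nat) (c : {ffun T -> 'I_k}) : bool :=
  [forall s : {perm T},
     (is_automorphism s && [forall x, c (s x) == c x]) ==> (s == 1%g)].

(* distinguishing number: least k admitting a distinguishing k-colouring
   (k = #|T| always works via an injective colouring) *)
Definition distinguishing_number : nat :=
  \big[minn/#|T|]_(k < #|T|.+1 | [exists c : {ffun T -> 'I_k}, distinguishing c])
     (k : nat).

End Graphs.

Definition path_graph (n : nat) : rel 'I_n :=
  fun i j => (i.+1 == j :> nat) || (j.+1 == i :> nat).
Arguments path_graph n : clear implicits.

(* Main.v *)
Require Import Defs.
From mathcomp Require Import all_boot fingroup perm.
From mathcomp Require Import zify.
Local Open Scope nat_scope.
Set Implicit Arguments. Unset Strict Implicit.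

Lemma bigmin_leP (I : eqType) (r : seq I) (P : pred I) (F : I -> nat) d i :
  i \in r -> P i -> \big[minn/d]_(j <- r | P j) F j <= F i.
Proof.
elim: r => // a r IH; rewrite inE big_cons; case/orP=> [/eqP<-|Hi] Pi.
  by rewrite Pi geq_minl.
case: (P a); last exact: IH.
exact: leq_trans (geq_minr _ _) (IH Hi Pi).
Qed.

Lemma bigmin_le_d (I : Type) (r : seq I) (P : pred I) (F : I -> nat) d :
  \big[minn/d]_(j <- r | P j) F j <= d.
Proof. elim/big_rec: _ => // i x _ Hx; exact: leq_trans (geq_minr _ _) Hx. Qed.

Lemma bigmin_geP (I : Type) (r : seq I) (P : pred I) (F : I -> nat) d m :
  m <= d -> (forall i, P i -> m <= F i) -> m <= \big[minn/d]_(j <- r | P j) F j.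
Proof. move=> Hd H; elim/big_rec: _ => // i x Pi Hx; by rewrite leq_min H. Qed.

Section Aut.
Variables (T : finType) (e : rel T).

Lemma aut_edge (s : {perm T}) : is_automorphism e s -> forall x y, e (s x) (s y) = e x y.
Proof. by move=> /forallP H x y; apply/eqP; move: (H x) => /forallP. Qed.

Lemma aut_inv (s : {perm T}) : is_automorphism e s -> is_automorphism e s^-1.
Proof.
move=> H; apply/forallP => x; apply/forallP => y; apply/eqP.
by rewrite -{2}(permKV s x) -{2}(permKV s y) (aut_edge H).
Qed.

Lemma walk_aut (s : {perm T}) k x y : is_automorphism e s ->
  walk_of_length e k x y -> walk_of_length e k (s x) (s y).
Proof.
move=> H /existsP [p /andP [Hp /eqP Hl]]; apply/existsP; exists (map_tuple s p).
rewrite /= (mono_path (e:=e)) ?Hp //=; last by move=> a b; rewrite (aut_edge H).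
by rewrite last_map Hl.
Qed.

Lemma gdist_aut (s : {perm T}) x y : is_automorphism e s ->
  gdist e (s x) (s y) = gdist e x y.
Proof.
move=> H; rewrite /gdist; apply: eq_bigl => k; apply/idP/idP; last exact: walk_aut.
by move=> /(walk_aut (aut_inv H)); rewrite !permK.
Qed.

Lemma dist_bound (S : {set T}) : resolving e S ->
  distinguishing_number e <= #|S| + 1.
Proof.
move=> HS.
have [Hle|Hlt] := leqP #|T| #|S|.
  apply: leq_trans (bigmin_le_d _ _ _ _) _; lia.
have Hk : #|S|.+1 < #|T|.+1 by [].
pose c : {ffun T -> 'I_#|S|.+1} :=
  [ffun x => inord (if x \in S then (index x (enum S)).+1 else 0)].
have Hc : forall x, (c x : nat) = if x \in S then (index x (enum S)).+1 else 0.
  move=> x; rewrite ffunE inordK //; case: ifP => // xS.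
  by rewrite ltnS cardE index_mem mem_enum.
rewrite addn1; apply: (leq_trans (bigmin_leP (fun k : 'I_#|T|.+1 => k : nat) _
   (i := Ordinal Hk) _ _)) => //; first exact: mem_index_enum.
apply/existsP; exists c; apply/forallP => s; apply/implyP => /andP [Ha /forallP Hcol].
have fixS : forall x, x \in S -> s x = x.
  move=> x xS; have := Hcol x; rewrite -val_eqE /= !Hc xS.
  case: ifP => // sxS /eqP [] Hi.
  have h1 : s x \in enum S by rewrite mem_enum.
  have h2 : x \in enum S by rewrite mem_enum.
  by rewrite -(nth_index x h1) Hi (nth_index x h2).
apply/eqP/permP => x; rewrite perm1; apply/eqP; apply/negPn/negP => Hx.
move: HS => /forallP /(_ (s x)) /forallP /(_ x) /implyP /(_ Hx) /existsP [v /andP [vS]].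
by rewrite -{1}(fixS v vS) gdist_aut // eqxx.
Qed.

Lemma part1 : distinguishing_number e <= metric_dim e + 1.
Proof.
have Hd : distinguishing_number e <= #|T| by apply: bigmin_le_d.
suff : distinguishing_number e - 1 <= metric_dim e by lia.
apply: bigmin_geP; first lia.
move=> S HS; have := dist_bound HS; lia.
Qed.

End Aut.

Section PathG.
Variable n : nat.
Local Notation e := (path_graph n.+2).

Lemma walk_bnd (p : seq 'I_n.+2) (x : 'I_n.+2) : path e x p ->
  (last x p : nat) <= x + size p /\ (x : nat) <= last x p + size p.
Proof.
elim: p x => [|y p IH] x /=; first by rewrite !addn0.
move=> /andP [Hxy /IH [H1 H2]]; move: Hxy; rewrite /path_graph => /orP [] /eqP Hxy; lia.
Qed.

Lemma walk_ex m (x : 'I_n.+2) : (x : nat) = m ->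
  exists p : seq 'I_n.+2, [/\ size p = m, path e x p & (last x p : nat) = 0].
Proof.
elim: m x => [|m IH] x Hx; first by exists [::].
have Hm : m < n.+2 by rewrite -ltnS -Hx ltnS ltnW.
have [p [Hs Hp Hl]] := IH (inord m) (inordK Hm).
exists (inord m :: p); split => //=; first by rewrite Hs.
by rewrite Hp andbT /path_graph inordK // Hx eqxx orbT.
Qed.

Lemma gdist0 (x : 'I_n.+2) : gdist e x ord0 = x.
Proof.
apply/eqP; rewrite eqn_leq; apply/andP; split.
  have xl : (x : nat) < #|'I_n.+2| by rewrite card_ord.
  apply: (leq_trans (bigmin_leP (fun k : 'I_#|'I_n.+2| => k : nat) _ (i := Ordinal xl) _ _)) => //;
    first exact: mem_index_enum.
  have [p [Hs Hp Hl]] := walk_ex (erefl (x : nat)).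
  apply/existsP; exists (Tuple (introT eqP Hs)); rewrite /= Hp /=.
  by apply/eqP/val_inj.
apply: bigmin_geP; first by rewrite card_ord ltnW.
move=> k /existsP [p /andP [Hp /eqP Hl]].
have [_ H2] := walk_bnd Hp; move: H2; rewrite Hl size_tuple /=; lia.
Qed.

Lemma mdim_path : metric_dim e = 1.
Proof.
apply/eqP; rewrite eqn_leq; apply/andP; split.
  rewrite -(cards1 (ord0 : 'I_n.+2)).
  apply: bigmin_leP; first exact: mem_index_enum.
  apply/forallP => x; apply/forallP => y; apply/implyP => Hxy.
  apply/existsP; exists ord0; rewrite set11 /= !gdist0.
  by apply: contra Hxy => /eqP H; apply/eqP/val_inj.
apply: bigmin_geP; first by rewrite card_ord.
move=> S /forallP /(_ ord0) /forallP /(_ ord_max) /implyP.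
rewrite -val_eqE /= => /(_ isT) /existsP [s /andP [sS _]].
by apply/card_gt0P; exists s.
Qed.

Lemma dist_ge2 k : [exists c : {ffun 'I_n.+2 -> 'I_k}, distinguishing e c] -> 2 <= k.
Proof.
move=> /existsP [c Hc].
case: k c Hc => [|[|k]] c Hc //; first by case: (c ord0).
pose s := perm (@rev_ord_inj n.+2).
have : s == 1%g -> False.
  move=> /eqP /permP /(_ ord0); rewrite permE perm1 => /(congr1 val) /=; lia.
move=> Hne; exfalso; apply: Hne; move: Hc => /forallP /(_ s) /implyP; apply; apply/andP; split.
  apply/forallP => x; apply/forallP => y; rewrite !permE /path_graph /=.
  apply/eqP; have := ltn_ord x; have := ltn_ord y.
  move: (x : nat) (y : nat) => a b ha hb.
  by apply/idP/idP => /orP [] /eqP H; apply/orP; [right|left|right|left]; apply/eqP; lia.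
by apply/forallP => x; rewrite [c (s x)]ord1 [c x]ord1.
Qed.

Lemma dnum_path : distinguishing_number e = 2.
Proof.
apply/eqP; rewrite eqn_leq; apply/andP; split.
  by have := part1 e; rewrite mdim_path.
apply: bigmin_geP; first by rewrite card_ord.
move=> k; exact: dist_ge2.
Qed.

End PathG.

Theorem proposition3p1 :
  (forall (T : finType) (e : rel T),
     simple_graph e -> connected_graph e ->
     distinguishing_number e <= metric_dim e + 1) /\
  (forall n : nat, 2 <= n ->
     distinguishing_number (path_graph n) = metric_dim (path_graph n) + 1).
Proof.
split; first by move=> T e _ _; apply: part1.
by case=> [|[|n]] // _; rewrite dnum_path mdim_path.
Qed.
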